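(* Let $G=(V,E)$ be an undirected weighted graph in which shortest paths are unique. Let $u,v\in V$, let $D\subseteq E$ be a set of $d$ edges such that $u$ and $v$ are connected in $G-D$, and let $r=\mathrm{rank}_{G-D}(u,v)$. Suppose $w$ is a vertex on $\pi_{G-D}(u,v)$ such that both $\pi(u,w)$ and $\pi(w,v)$ contain an edge of $D$. Then $\mathrm{rank}_{G-D}(u,w)\le r-1$ and $\mathrm{rank}_{G-D}(w,v)\le r-1$.
   Context: For $D\subseteq E$, $G-D$ is $G$ with the edges of $D$ removed. For a graph $H$ and vertices $a,b$, $\pi_H(a,b)$ denotes the (unique) shortest path from $a$ to $b$ in $H$, regarded as a directed path from $a$ to $b$; $\pi(a,b)=\pi_G(a,b)$. A path is $k$-decomposable if it is the concatenation of at most $k+1$ shortest paths in $G$, interleaved with at most $k$ edges. $\mathrm{rank}_{G-D}(a,b)$ is the smallest integer $i\ge 0$ such that $\pi_{G-D}(a,b)$ is an $i$-decomposable path. *)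

(* Defs.v *)
From HB Require Import structures.
From mathcomp Require Import all_boot all_order all_algebra.
Set Implicit Arguments. Unset Strict Implicit. Unset Printing Implicit Defensive.
Import Order.TTheory GRing.Theory Num.Theory.
Local Open Scope ring_scope.

(* A path (or walk) is represented
   by its non-empty vertex sequence [x :: p]. *)

Section Graph.
Variables (V : finType) (R : realDomainType).

Definition undirected_weighted_graph (adj : rel V) (wt : V -> V -> R) : Prop :=
  [/\ symmetric adj, irreflexive adj,
      (forall x y, wt x y = wt y x) &
      (forall x y, adj x y -> 0 < wt x y)].

Definition in_D (D : {set V * V}) (x y : V) : bool := ((x, y) \in D) || ((y, x) \in D).

Definition adj_minus (adj : rel V) (D : {set V * V}) : rel V :=
  fun x y => adj x y && ~~ in_D D x y.

Definition edge_set (adj : rel V) (D : {set V * V}) : Prop :=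
  forall e, e \in D -> adj e.1 e.2.

Fixpoint pweight (wt : V -> V -> R) (x : V) (p : seq V) : R :=
  if p is y :: q then wt x y + pweight wt y q else 0.

Definition is_sp (e : rel V) (wt : V -> V -> R) (a b : V) (s : seq V) : Prop :=
  exists p, [/\ s = a :: p, path e a p, last a p = b &
    forall q, path e a q -> last a q = b -> pweight wt a p <= pweight wt a q].

Definition edges_of (s : seq V) : seq (V * V) := zip s (behead s).

Definition contains_D_edge (D : {set V * V}) (s : seq V) : Prop :=
  has (fun e => in_D D e.1 e.2) (edges_of s).

(* [dec adj wt s n]: s is the concatenation of n+1 shortest paths of G,
   where consecutive pieces are either glued at a common vertex or joined by
   an edge of G (hence at most n edges are interleaved). *)
Inductive dec (adj : rel V) (wt : V -> V -> R) : seq V -> nat -> Prop :=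
| dec_one a b Q : is_sp adj wt a b Q -> dec adj wt Q 0
| dec_glue a b Q S n : is_sp adj wt a b Q -> dec adj wt S n ->
    head b S = b -> dec adj wt (Q ++ behead S) n.+1
| dec_edge a b Q S n : is_sp adj wt a b Q -> dec adj wt S n ->
    S <> [::] -> adj b (head b S) -> dec adj wt (Q ++ S) n.+1.

Definition decomposable (adj : rel V) (wt : V -> V -> R) (s : seq V) (k : nat) : Prop :=
  exists2 n, (n <= k)%N & dec adj wt s n.

Definition is_rank (adj : rel V) (wt : V -> V -> R) (s : seq V) (r : nat) : Prop :=
  decomposable adj wt s r /\ forall i, decomposable adj wt s i -> (r <= i)%N.

Definition unique_shortest_paths (adj : rel V) (wt : V -> V -> R) : Prop :=
  forall (D : {set V * V}) a b s1 s2,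
    is_sp (adj_minus adj D) wt a b s1 -> is_sp (adj_minus adj D) wt a b s2 -> s1 = s2.

End Graph.

(* Main.v *)
Require Import Defs.
From HB Require Import structures.
From mathcomp Require Import all_boot all_order all_algebra.
From mathcomp Require Import zify.
From Stdlib Require Classical_Prop.
Import Order.TTheory GRing.Theory Num.Theory.
Local Open Scope ring_scope.

Section Aux.
Local Set Implicit Arguments.
Local Unset Strict Implicit.
Variables (V : finType) (R : realDomainType).
Implicit Types (adj e : rel V) (wt : V -> V -> R).

Lemma pweight_cat wt x p q :
  pweight wt x (p ++ q) = pweight wt x p + pweight wt (last x p) q.
Proof.
elim: p x => [|y p IH] x /=; first by rewrite add0r.
by rewrite IH addrA.
Qed.

Lemma sp_split2 e wt a b p1 p2 :
  is_sp e wt a b (a :: p1 ++ p2) ->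
  is_sp e wt a (last a p1) (a :: p1) /\ is_sp e wt (last a p1) b (last a p1 :: p2).
Proof.
case=> p [[<-] Hpath Hlast Hopt].
rewrite cat_path in Hpath; case/andP: Hpath => H1 H2.
rewrite last_cat in Hlast.
split.
- exists p1; split => // q Hq Hql.
  have := Hopt (q ++ p2).
  rewrite cat_path Hq Hql H2 last_cat Hql => /(_ isT Hlast).
  by rewrite !pweight_cat Hql lerD2r.
- exists p2; split => // q Hq Hql.
  have := Hopt (p1 ++ q).
  rewrite cat_path Hq H1 last_cat Hql => /(_ isT erefl).
  by rewrite !pweight_cat lerD2l.
Qed.

Lemma sp_split e wt a b s1 c s2 :
  is_sp e wt a b (s1 ++ c :: s2) ->
  is_sp e wt a c (rcons s1 c) /\ is_sp e wt c b (c :: s2).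
Proof.
case: s1 => [|a' s1] /= H.
- have Ha : c = a by case: H => p [[->]].
  subst c; exact: (@sp_split2 e wt a b [::] s2 H).
- have Ha : a' = a by case: H => p [[->]].
  subst a'.
  have := (@sp_split2 e wt a b (rcons s1 c) s2).
  rewrite cat_rcons last_rcons => /(_ H) [H1 H2].
  by split.
Qed.

Lemma cat_split2 (T : eqType) (Q A s1 s2 : seq T) (x : T) :
  Q ++ A = s1 ++ x :: s2 ->
  (exists t, Q = s1 ++ x :: t /\ s2 = t ++ A) \/
  (exists t, s1 = Q ++ t /\ A = t ++ x :: s2).
Proof.
elim: Q s1 => [|y Q IH] s1 /=.
- by move=> ->; right; exists s1.
- case: s1 => [|z s1] /= [-> E].
  + by left; exists Q; rewrite E.
  + case: (IH s1 E) => [[t [-> ->]]|[t [-> ->]]].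
    * by left; exists t.
    * by right; exists t.
Qed.

Lemma dec_split adj wt s n :
  dec adj wt s n -> forall s1 x s2, s = s1 ++ x :: s2 ->
  exists j, [/\ (j <= n)%N, dec adj wt (rcons s1 x) j & dec adj wt (x :: s2) (n - j)].
Proof.
elim=> {s n}.
- move=> a b Q HQ s1 x s2 E; subst Q.
  case: (sp_split HQ) => H1 H2.
  exists 0%N; split => //; [exact: dec_one H1 | exact: dec_one H2].
- move=> a b Q S n HQ HS IH Hh s1 x s2 E.
  case: (cat_split2 E) => [[t [EQ Es2]]|[t [Es1 EA]]].
  + subst Q s2; case: (sp_split HQ) => H1 H2.
    exists 0%N; split => //; first exact: dec_one H1.
    rewrite subn0 -cat_cons; exact: dec_glue H2 HS Hh.
  + clear E; case: S HS IH Hh EA => [|c S] HS IH Hh EA; first by move: EA; clear; case: t.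
    rewrite /= in Hh EA; subst c S s1.
    case: (IH (b :: t) x s2 erefl) => j [Hj D1 D2].
    exists j.+1; split => //.
    * have -> : rcons (Q ++ t) x = Q ++ behead (rcons (b :: t) x) by rewrite rcons_cat.
      exact: dec_glue HQ D1 _.
- move=> a b Q S n HQ HS IH Hne Hadj s1 x s2 E.
  case: (cat_split2 E) => [[t [EQ Es2]]|[t [Es1 EA]]].
  + subst Q s2; case: (sp_split HQ) => H1 H2.
    exists 0%N; split => //; first exact: dec_one H1.
    rewrite subn0 -cat_cons; exact: dec_edge H2 HS Hne Hadj.
  + subst S s1.
    case: (IH t x s2 erefl) => j [Hj D1 D2].
    exists j.+1; split => //.
    * rewrite rcons_cat; apply: dec_edge HQ D1 _ _.
      - by clear; case: t.
      - by move: Hadj; clear; case: t.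
Qed.

Lemma rank_exists adj wt s k :
  decomposable adj wt s k -> exists r, is_rank adj wt s r /\ (r <= k)%N.
Proof.
elim: k => [|k IH] Hk.
- by exists 0%N; split => //; split.
- case: (Classical_Prop.classic (decomposable adj wt s k)) => Hd.
  + by case: (IH Hd) => r [Hr Hrk]; exists r; split => //; apply: leqW.
  + exists k.+1; split => //; split => // i [m Hm Hdm].
    rewrite ltnNge; apply/negP => Hik; apply: Hd; exists m => //.
    exact: leq_trans Hm Hik.
Qed.

Lemma is_sp_ends e e' wt wt' a b a' b' s :
  is_sp e wt a b s -> is_sp e' wt' a' b' s -> a = a' /\ b = b'.
Proof.
case=> p [-> _ <- _]; case=> p' [[<- <-] _ <- _]; done.
Qed.

Lemma is_sp_ext e e' wt a b s :
  e =2 e' -> is_sp e wt a b s -> is_sp e' wt a b s.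
Proof.
move=> Hee [p [Hs Hp Hl Ho]]; exists p; split => //.
- by rewrite -(eq_path Hee).
- by move=> q Hq; apply: Ho; rewrite (eq_path Hee).
Qed.

Lemma path_noD adj D a p :
  path (adj_minus adj D) a p -> ~ contains_D_edge D (a :: p).
Proof.
move=> H; apply/negP; move: H.
elim: p a => [|y p IH] a //= /andP [/andP [_ Hn] Hp].
rewrite /contains_D_edge /= negb_or Hn /=.
exact: IH.
Qed.

Lemma sp_noD adj D wt a b s :
  is_sp (adj_minus adj D) wt a b s -> ~ contains_D_edge D s.
Proof. by case=> p [-> Hp _ _]; apply: path_noD Hp. Qed.

End Aux.

Theorem claim3p2 (V : finType) (R : realDomainType) (adj : rel V) (wt : V -> V -> R)
  (D : {set V * V}) (u v w : V) (P : seq V) (r : nat) :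
  undirected_weighted_graph adj wt ->
  unique_shortest_paths adj wt ->
  edge_set adj D ->
  (* P = pi_{G-D}(u,v); its existence means u, v are connected in G - D *)
  is_sp (adj_minus adj D) wt u v P ->
  is_rank adj wt P r ->
  w \in P ->
  (exists2 Q, is_sp adj wt u w Q & contains_D_edge D Q) ->
  (exists2 Q, is_sp adj wt w v Q & contains_D_edge D Q) ->
  (forall P1, is_sp (adj_minus adj D) wt u w P1 ->
     exists r1, is_rank adj wt P1 r1 /\ (r1 < r)%N) /\
  (forall P2, is_sp (adj_minus adj D) wt w v P2 ->
     exists r2, is_rank adj wt P2 r2 /\ (r2 < r)%N).
Proof.
move=> _ Huniq _ HP [[n Hnr Hdec] _] HwP [Q1 HQ1 HD1] [Q2 HQ2 HD2].
have [s1 [s2 EP]] : exists s1 s2, P = s1 ++ w :: s2.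
  by case/splitPr: HwP => s1 s2; exists s1, s2.
have HP' := HP; rewrite EP in HP'.
have [Hs1 Hs2] := sp_split HP'.
have [j [Hjn Dj1 Dj2]] := dec_split Hdec EP.
have Hset0 : adj =2 adj_minus adj set0.
  by move=> x y; rewrite /adj_minus /in_D !in_set0 andbT.
have Hj0 : j <> 0%N.
  move=> Ej; rewrite Ej in Dj1; inversion Dj1; subst.
  have [Ea Eb] := is_sp_ends H Hs1; subst.
  have E := Huniq set0 _ _ _ _ (is_sp_ext Hset0 H) (is_sp_ext Hset0 HQ1).
  by move: (sp_noD Hs1); rewrite E; apply.
have Hnj0 : (n - j)%N <> 0%N.
  move=> Ej; rewrite Ej in Dj2; inversion Dj2; subst.
  have [Ea Eb] := is_sp_ends H Hs2; subst.
  have E := Huniq set0 _ _ _ _ (is_sp_ext Hset0 H) (is_sp_ext Hset0 HQ2).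
  by move: (sp_noD Hs2); rewrite E; apply.
split.
- move=> P1 HP1; rewrite (Huniq D _ _ _ _ HP1 Hs1).
  have [r1 [Hr1 Hr1j]] := @rank_exists _ _ adj wt _ j (ex_intro2 _ _ j (leqnn j) Dj1).
  exists r1; split => //; lia.
- move=> P2 HP2; rewrite (Huniq D _ _ _ _ HP2 Hs2).
  have [r2 [Hr2 Hr2j]] := @rank_exists _ _ adj wt _ (n - j)%N
     (ex_intro2 _ _ (n - j)%N (leqnn _) Dj2).
  exists r2; split => //; lia.
Qed.
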